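(* Let $(G,\cdot,D,\star)$ be an invariant probabilistic metric group with identity $e$, where $\star$ is sup-continuous. Then $Lip^1_\star(G,\Delta^+)$ is closed under $\odot$, and $(Lip^1_\star(G,\Delta^+),\odot)$ is a monoid with identity element $\delta_e$. Moreover, the map $\delta:(G,\cdot)\to(Lip^1_\star(G,\Delta^+),\odot)$, $a\mapsto\delta_a$, is an injective homomorphism.
   Context: A distribution function is a nondecreasing, left-continuous function $F:[-\infty,+\infty]\to[0,1]$ with $F(-\infty)=0$, $F(+\infty)=1$; $\Delta^+$ is the set of distribution functions with $F(0)=0$, ordered pointwise; $(\Delta^+,\le)$ is a complete lattice with maximum $\mathcal H_0$ ($\mathcal H_0(t)=0$ for $t\le0$, $1$ for $t>0$). A triangle function is a binary operation $\star$ on $\Delta^+$ that is commutative, associative, nondecreasing in each argument, with $F\star\mathcal H_0=F$; it is sup-continuous if $\sup_{i\in I}(F_i\star L)=(\sup_{i\in I}F_i)\star L$ for every nonempty family $(F_i)$ and every $L$. A probabilistic metric space $(G,D,\star)$ consists of a set $G$, a triangle function $\star$ and $D:G\times G\to\Delta^+$ with (i) $D(p,q)=\mathcal H_0$ iff $p=q$; (ii) $D(p,q)=D(q,p)$; (iii) $D(p,q)\star D(q,r)\le D(p,r)$. If $(G,\cdot)$ is a group and $D(pr,qr)=D(rp,rq)=D(p,q)$ for all $p,q,r$, it is an invariant probabilistic metric group. $Lip^1_\star(G,\Delta^+)$ is the set of maps $f:G\to\Delta^+$ with $D(x,y)\star f(y)\le f(x)$ for all $x,y$. $\delta_a(y)=D(y,a)$.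 For maps $f,g:G\to\Delta^+$, $(f\odot g)(x)=\sup_{y,z\in G,\ yz=x}f(y)\star g(z)$. *)

(* Defs.v *)
From Stdlib Require Import Reals Lra Classical ClassicalEpsilon.
Open Scope R_scope.

(* Distribution functions in Delta^+ (Schweizer--Sklar convention).
   F(-oo) = 0 and F(+oo) = 1 are fixed by convention and not stored;
   we store the restriction of F to the real line, which must be
   [0,1]-valued, nondecreasing, left-continuous on R, and vanish on (-oo,0]. *)
Record Dplus : Type := MkDplus {
  df :> R -> R;
  df_range : forall t, 0 <= df t <= 1;
  df_mono : forall s t, s <= t -> df s <= df t;
  df_lcont : forall t eps, 0 < eps ->
      exists delta, 0 < delta /\
        forall s, t - delta < s < t -> Rabs (df s - df t) < eps;
  df_zero : forall t, t <= 0 -> df t = 0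
}.

Definition H0_fun (t : R) : R := if Rle_dec t 0 then 0 else 1.

Lemma H0_range : forall t, 0 <= H0_fun t <= 1.
Proof. intro t; unfold H0_fun; destruct (Rle_dec t 0); lra. Qed.

Lemma H0_mono : forall s t, s <= t -> H0_fun s <= H0_fun t.
Proof.
  intros s t H; unfold H0_fun; destruct (Rle_dec s 0), (Rle_dec t 0); lra.
Qed.

Lemma H0_lcont : forall t eps, 0 < eps ->
  exists delta, 0 < delta /\
    forall s, t - delta < s < t -> Rabs (H0_fun s - H0_fun t) < eps.
Proof.
  intros t eps He. destruct (Rle_dec t 0) as [Ht|Ht].
  - exists 1; split; [lra|]. intros s Hs. unfold H0_fun.
    destruct (Rle_dec s 0); destruct (Rle_dec t 0); try lra.
    rewrite Rminus_diag, Rabs_R0; lra.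
  - exists t; split; [lra|]. intros s Hs. unfold H0_fun.
    destruct (Rle_dec s 0); destruct (Rle_dec t 0); try lra.
    rewrite Rminus_diag, Rabs_R0; lra.
Qed.

Lemma H0_zero : forall t, t <= 0 -> H0_fun t = 0.
Proof. intros t H; unfold H0_fun; destruct (Rle_dec t 0); lra. Qed.

Definition H0 : Dplus := MkDplus H0_fun H0_range H0_mono H0_lcont H0_zero.

Definition Dle (F G : Dplus) : Prop := forall t, F t <= G t.

Definition is_supD (A : Dplus -> Prop) (S : Dplus) : Prop :=
  (forall F, A F -> Dle F S) /\
  (forall U, (forall F, A F -> Dle F U) -> Dle S U).

(* The supremum in the complete lattice (Delta^+, <=), as a definite
   description (it always exists; the default H0 is never used). *)
Definition supD (A : Dplus -> Prop) : Dplus :=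
  epsilon (inhabits H0) (is_supD A).

Definition triangle_function (star : Dplus -> Dplus -> Dplus) : Prop :=
  (forall F G, star F G = star G F) /\
  (forall F G K, star (star F G) K = star F (star G K)) /\
  (forall F F' G, Dle F F' -> Dle (star F G) (star F' G)) /\
  (forall F G G', Dle G G' -> Dle (star F G) (star F G')) /\
  (forall F, star F H0 = F).

(* sup (F_i * L) = (sup F_i) * L for every nonempty family; stated for the
   family through its (nonempty) set of members. *)
Definition sup_continuous (star : Dplus -> Dplus -> Dplus) : Prop :=
  forall (A : Dplus -> Prop) (L : Dplus), (exists F, A F) ->
    supD (fun K => exists F, A F /\ K = star F L) = star (supD A) L.

Definition is_group {G : Type} (mul : G -> G -> G) (inv : G -> G) (e : G) : Prop :=
  (forall x y z, mul (mul x y) z = mul x (mul y z)) /\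
  (forall x, mul e x = x) /\ (forall x, mul x e = x) /\
  (forall x, mul (inv x) x = e) /\ (forall x, mul x (inv x) = e).

Definition pm_space {G : Type} (D : G -> G -> Dplus) (star : Dplus -> Dplus -> Dplus) : Prop :=
  triangle_function star /\
  (forall p q, D p q = H0 <-> p = q) /\
  (forall p q, D p q = D q p) /\
  (forall p q r, Dle (star (D p q) (D q r)) (D p r)).

Definition invariant {G : Type} (mul : G -> G -> G) (D : G -> G -> Dplus) : Prop :=
  forall p q r, D (mul p r) (mul q r) = D p q /\ D (mul r p) (mul r q) = D p q.

Definition Lip1 {G : Type} (D : G -> G -> Dplus) (star : Dplus -> Dplus -> Dplus)
  (f : G -> Dplus) : Prop :=
  forall x y, Dle (star (D x y) (f y)) (f x).

Definition delta {G : Type} (D : G -> G -> Dplus) (a : G) : G -> Dplus :=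
  fun y => D y a.

Definition odot {G : Type} (mul : G -> G -> G) (star : Dplus -> Dplus -> Dplus)
  (f g : G -> Dplus) : G -> Dplus :=
  fun x => supD (fun K => exists y z, mul y z = x /\ K = star (f y) (g z)).

(* Main.v *)
Require Import Defs.
From Stdlib Require Import Reals.
From Stdlib Require Import Lra Classical ClassicalEpsilon FunctionalExtensionality ProofIrrelevance.
Open Scope R_scope.

Lemma Dplus_eq (F G : Dplus) : (forall t, F t = G t) -> F = G.
Proof.
  destruct F as [f1 r1 m1 l1 z1], G as [f2 r2 m2 l2 z2]; simpl; intro H.
  assert (f1 = f2) by (apply functional_extensionality; exact H). subst f2.
  f_equal; apply proof_irrelevance.
Qed.

Lemma Dle_antisym (F G : Dplus) : Dle F G -> Dle G F -> F = G.
Proof. intros H1 H2; apply Dplus_eq; intro t; specialize (H1 t); specialize (H2 t); lra. Qed.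

Lemma Dle_trans (F G K : Dplus) : Dle F G -> Dle G K -> Dle F K.
Proof. intros H1 H2 t; specialize (H1 t); specialize (H2 t); lra. Qed.

Lemma eq_Dle (F G : Dplus) : F = G -> Dle F G.
Proof. intros ->; intro t; lra. Qed.

Lemma zero_range : forall t:R, 0 <= (fun _ => 0) t <= 1. Proof. intros; lra. Qed.
Lemma zero_mono : forall s t:R, s <= t -> (fun _:R => 0) s <= (fun _:R => 0) t. Proof. intros; lra. Qed.
Lemma zero_lcont : forall t eps, 0 < eps -> exists delta, 0 < delta /\
   forall s, t - delta < s < t -> Rabs ((fun _:R => 0) s - (fun _:R => 0) t) < eps.
Proof. intros t eps He; exists 1; split; [lra|]; intros; rewrite Rminus_diag, Rabs_R0; lra. Qed.
Lemma zero_zero : forall t, t <= 0 -> (fun _:R => 0) t = 0. Proof. reflexivity. Qed.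

Lemma sup_exists (A : Dplus -> Prop) : exists S, is_supD A S.
Proof.
  destruct (classic (exists F, A F)) as [Hne|Hne].
  2:{ exists (MkDplus (fun _ => 0) zero_range zero_mono zero_lcont zero_zero).
      split.
      - intros F HF; exfalso; apply Hne; eauto.
      - intros U _ t; simpl; apply (df_range U). }
  set (E := fun t r => exists F, A F /\ r = F t).
  assert (bnd : forall t, bound (E t)).
  { intro t; exists 1; intros r [F [_ ->]]; apply (df_range F). }
  assert (ne : forall t, exists r, E t r).
  { intro t; destruct Hne as [F HF]; exists (F t); exists F; auto. }
  set (s := fun t => proj1_sig (completeness (E t) (bnd t) (ne t))).
  assert (Hs : forall t, is_lub (E t) (s t)).
  { intro t; unfold s; destruct (completeness (E t) (bnd t) (ne t)); simpl; auto. }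
  assert (ub : forall F t, A F -> F t <= s t).
  { intros F t HF; apply (proj1 (Hs t)); exists F; auto. }
  assert (lst : forall t u, (forall F, A F -> F t <= u) -> s t <= u).
  { intros t u H; apply (proj2 (Hs t)); intros r [F [HF ->]]; auto. }
  assert (r1 : forall t, 0 <= s t <= 1).
  { intro t; split.
    - destruct Hne as [F HF]; pose proof (df_range F t); pose proof (ub F t HF); lra.
    - apply lst; intros F _; apply (df_range F). }
  assert (m1 : forall a b, a <= b -> s a <= s b).
  { intros a b Hab; apply lst; intros F HF; pose proof (df_mono F a b Hab);
    pose proof (ub F b HF); lra. }
  assert (z1 : forall t, t <= 0 -> s t = 0).
  { intros t Ht; apply Rle_antisym; [|apply r1].
    apply lst; intros F _; rewrite (df_zero F t Ht); lra. }
  assert (l1 : forall t eps, 0 < eps -> exists delta, 0 < delta /\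
        forall u, t - delta < u < t -> Rabs (s u - s t) < eps).
  { intros t eps He.
    assert (HF : exists F, A F /\ F t > s t - eps/2).
    { apply NNPP; intro Hn.
      assert (s t <= s t - eps/2) by (apply lst; intros F HF;
        apply Rnot_lt_le; intro Hc; apply Hn; exists F; split; auto; lra).
      lra. }
    destruct HF as [F [HF HFt]].
    destruct (df_lcont F t (eps/2)) as [d [Hd Hd2]]; [lra|].
    exists d; split; auto; intros u Hu.
    specialize (Hd2 u Hu). apply Rabs_def2 in Hd2.
    pose proof (ub F u HF). pose proof (m1 u t (Rlt_le _ _ (proj2 Hu))).
    apply Rabs_def1; lra. }
  exists (MkDplus s r1 m1 l1 z1); split.
  - intros F HF t; simpl; auto.
  - intros U HU t; simpl; apply lst; intros F HF; apply HU; auto.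
Qed.

Lemma supD_spec (A : Dplus -> Prop) : is_supD A (supD A).
Proof.
  unfold supD. apply epsilon_spec. apply sup_exists.
Qed.

Lemma sup_ub (A : Dplus -> Prop) F : A F -> Dle F (supD A).
Proof. apply (proj1 (supD_spec A)). Qed.

Lemma sup_least (A : Dplus -> Prop) U : (forall F, A F -> Dle F U) -> Dle (supD A) U.
Proof. apply (proj2 (supD_spec A)). Qed.

Theorem theorem1 (G : Type) (mul : G -> G -> G) (inv : G -> G) (e : G)
  (D : G -> G -> Dplus) (star : Dplus -> Dplus -> Dplus)
  (Hgrp : is_group mul inv e) (Hpm : pm_space D star)
  (Hinv : invariant mul D) (Hsup : sup_continuous star) :
  (* Lip^1 closed under odot *)
  (forall f g, Lip1 D star f -> Lip1 D star g -> Lip1 D star (odot mul star f g)) /\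
  (* monoid: associativity, identity delta_e *)
  (forall f g h, Lip1 D star f -> Lip1 D star g -> Lip1 D star h ->
     odot mul star (odot mul star f g) h = odot mul star f (odot mul star g h)) /\
  Lip1 D star (delta D e) /\
  (forall f, Lip1 D star f ->
     odot mul star (delta D e) f = f /\ odot mul star f (delta D e) = f) /\
  (* delta : G -> Lip^1 is an injective homomorphism *)
  (forall a, Lip1 D star (delta D a)) /\
  (forall a b, delta D a = delta D b -> a = b) /\
  (forall a b, delta D (mul a b) = odot mul star (delta D a) (delta D b)).
Proof.
  destruct Hgrp as [Hassoc [Hel [Her [Hinvl Hinvr]]]].
  destruct Hpm as [[Hcomm [Hsassoc [Hmonl [Hmonr Hid]]]] [HD0 [Hsym Htri]]].
  assert (HidL : forall F, star H0 F = F) by (intro F; rewrite Hcomm; apply Hid).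
  assert (HDD : forall p, D p p = H0) by (intro p; apply HD0; reflexivity).
  assert (LipDelta : forall a, Lip1 D star (delta D a)).
  { intros a x y; unfold delta; apply Htri. }
  split; [|split; [|split; [|split; [|split; [|split]]]]].
  -
    intros f g Hf Hg x y. unfold odot.
    rewrite Hcomm.
    rewrite <- (Hsup _ (D x y)).
    2:{ exists (star (f y) (g e)); exists y, e; split; auto. }
    apply sup_least. intros K [F [[y1 [z1 [Hyz ->]]] ->]].
    set (x' := mul x (inv z1)).
    assert (Hx' : mul x' z1 = x) by (unfold x'; rewrite Hassoc, Hinvl; auto).
    apply Dle_trans with (star (f x') (g z1)).
    + apply Dle_trans with (star (star (D x y) (f y1)) (g z1)).
      * apply eq_Dle. rewrite (Hcomm _ (D x y)), Hsassoc; reflexivity.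
      * apply Hmonl. assert (D x y = D x' y1).
        { rewrite <- Hx', <- Hyz. apply (proj1 (Hinv x' y1 z1)). }
        rewrite H. apply Hf.
    + apply sup_ub. exists x', z1; auto.
  -
    intros f g h _ _ _. apply functional_extensionality; intro x.
    unfold odot. apply Dle_antisym.
    + apply sup_least. intros K [y [z [Hyz ->]]].
      rewrite <- (Hsup _ (h z)).
      2:{ exists (star (f y) (g e)); exists y, e; split; auto. }
      apply sup_least. intros K [F [[u [v [Huv ->]]] ->]].
      rewrite Hsassoc.
      apply Dle_trans with (star (f u)
        (supD (fun K => exists y0 z0, mul y0 z0 = mul v z /\ K = star (g y0) (h z0)))).
      * apply Hmonr. apply sup_ub. exists v, z; auto.
      * apply sup_ub. exists u, (mul v z); split; auto.
        rewrite <- Hassoc, Huv; auto.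
    + apply sup_least. intros K [y [z [Hyz ->]]].
      rewrite Hcomm.
      rewrite <- (Hsup _ (f y)).
      2:{ exists (star (g z) (h e)); exists z, e; split; auto. }
      apply sup_least. intros K [F [[u [v [Huv ->]]] ->]].
      rewrite Hcomm, <- Hsassoc.
      apply Dle_trans with (star
        (supD (fun K => exists y0 z0, mul y0 z0 = mul y u /\ K = star (f y0) (g z0))) (h v)).
      * apply Hmonl. apply sup_ub. exists y, u; auto.
      * apply sup_ub. exists (mul y u), v; split; auto.
        rewrite Hassoc, Huv; auto.
  - apply LipDelta.
  - intros f Hf; split; apply functional_extensionality; intro x; unfold odot, delta;
      apply Dle_antisym.
    + apply sup_least. intros K [y [z [Hyz ->]]].
      assert (D y e = D x z).
      { rewrite <- Hyz. rewrite <- (Hel z) at 2. symmetry; apply (proj1 (Hinv y e z)). }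
      rewrite H, <- Hyz. apply Hf.
    + apply Dle_trans with (star (D e e) (f x)).
      * rewrite HDD, HidL. intro t; lra.
      * apply sup_ub. exists e, x; auto.
    + apply sup_least. intros K [y [z [Hyz ->]]].
      assert (D z e = D x y).
      { rewrite <- Hyz. rewrite <- (Her y) at 2. symmetry; apply (proj2 (Hinv z e y)). }
      rewrite H, Hcomm, <- Hyz. apply Hf.
    + apply Dle_trans with (star (f x) (D e e)).
      * rewrite HDD, Hid. intro t; lra.
      * apply sup_ub. exists x, e; auto.
  - apply LipDelta.
  - intros a b H. apply HD0. unfold delta in H.
    pose proof (f_equal (fun k => k a) H) as H1; simpl in H1.
    rewrite <- H1; apply HDD.
  - intros a b. apply functional_extensionality; intro x; unfold odot, delta.
    apply Dle_antisym.
    + set (y := mul x (inv b)).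
      assert (Hy : mul y b = x) by (unfold y; rewrite Hassoc, Hinvl; auto).
      apply Dle_trans with (star (D y a) (D b b)).
      * rewrite HDD, Hid. rewrite <- Hy at 1. rewrite (proj1 (Hinv y a b)). intro t; lra.
      * apply sup_ub. exists y, b; auto.
    + apply sup_least. intros K [y [z [Hyz ->]]].
      rewrite <- (proj1 (Hinv y a z)), <- (proj2 (Hinv z b a)), <- Hyz.
      apply Htri.
Qed.
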